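(* Let $S=\{g_1,\dots,g_d\}$ be a finite set of generator symbols, $\mathcal C$ a finite set of colors, and $T$ a finite set of Wang tiles on $\mathcal C$ and $S$. Then $T$ satisfies condition $(\star\star)'$ if and only if the family of graphs $\Gamma_1,\dots,\Gamma_d$ associated to $T$ satisfies condition $(\star\star)$.
   Context: A Wang tile on $\mathcal C$ and $S$ is a map $\tau: S\cup S^{-1}\to\mathcal C$. The graphs associated to $T$: for each $1\le i\le d$, $\Gamma_i$ is the directed graph with vertex set $T$ and an edge $\tau\to\tau'$ if and only if $\tau(g_i)=\tau'(g_i^{-1})$. A cycle in a directed graph $\Gamma$ is a closed walk $\overline{a_1,\dots,a_n}$ (vertices and edges may repeat) with edges $a_k\to a_{k+1}$ for $k<n$ and $a_n\to a_1$; it is simple if $a_1,\dots,a_n$ are pairwise distinct. For a cycle $w$ and vertex $a$, $|w|_a=\#\{k : a_k=a\}$. Let $\mathcal{SC}(\Gamma_i)=\{\omega_i^1,\dots,\omega_i^{m_i}\}$ be the (finite) set of simple cycles of $\Gamma_i$ (up to cyclic rotation). Condition $(\star\star)$: every $\Gamma_i$ contains at least one cycle, and there exist nonnegative reals $x_{i,j}$ ($1\le i\le d$, $1\le j\le m_i$), not all zero, such that for every vertex $a\in T$, $\sum_{j=1}^{m_1} x_{1,j}|\omega_1^j|_a=\sum_{j=1}^{m_2} x_{2,j}|\omega_2^j|_a=\dots=\sum_{j=1}^{m_d} x_{d,j}|\omega_d^j|_a$. Condition $(\star\star)'$: for $g\in S\cup S^{-1}$ and $c\in\mathcal C$ let $c_g=\{\tau\in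 T:\tau(g)=c\}$. $T$ satisfies $(\star\star)'$ if there exist nonnegative reals $(x_\tau)_{\tau\in T}$, not all zero, with $\sum_{\tau\in c_g}x_\tau=\sum_{\tau\in c_{g^{-1}}}x_\tau$ for all $g\in S$ and all $c\in\mathcal C$. *)

(* Defs.v *)
From HB Require Import structures.
From mathcomp Require Import all_boot all_order all_algebra.
Set Implicit Arguments. Unset Strict Implicit. Unset Printing Implicit Defensive.
Import Order.TTheory GRing.Theory Num.Theory.
Local Open Scope ring_scope.

(* Generators S = {g_0, ..., g_(d-1)} indexed by 'I_d.  The symbols of
   S ∪ S^{-1} are pairs (i, b) : 'I_d * bool, with (i, false) = g_i and
   (i, true) = g_i^{-1}. *)
Definition wang_tile (d : nat) (C : finType) := {ffun 'I_d * bool -> C}.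

Definition gen {d : nat} (i : 'I_d) : 'I_d * bool := (i, false).
Definition geninv {d : nat} (i : 'I_d) : 'I_d * bool := (i, true).

Section Wang.
Variables (d : nat) (C : finType) (T : {set wang_tile d C}).

Definition Gamma (i : 'I_d) : rel (wang_tile d C) :=
  fun tau tau' => [&& tau \in T, tau' \in T & tau (gen i) == tau' (geninv i)].

Definition is_cycle (i : 'I_d) (w : seq (wang_tile d C)) : bool :=
  (w != [::]) && cycle (Gamma i) w.

Definition is_simple_cycle (i : 'I_d) (w : seq (wang_tile d C)) : bool :=
  is_cycle i w && uniq w.

Fixpoint seqs_in (n : nat) : seq (seq (wang_tile d C)) :=
  if n is n'.+1 then [seq x :: s | x <- enum T, s <- seqs_in n'] else [:: [::]].

(* canonical representative of the rotation class of w: rotate w so that it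
   starts with its element of least rank in the enumeration of the tile type *)
Definition canon_rot (w : seq (wang_tile d C)) : seq (wang_tile d C) :=
  match w with
  | [::] => [::]
  | a :: _ => let x := head a [seq y <- enum (wang_tile d C) | y \in w] in
              rot (index x w) w
  end.

(* SC(Gamma_i): the finite set of simple cycles of Gamma_i up to rotation,
   each represented once (by its canonical rotation) *)
Definition simple_cycles (i : 'I_d) : seq (seq (wang_tile d C)) :=
  undup [seq canon_rot w |
          w <- flatten [seq seqs_in n | n <- iota 1 #|T|] & is_simple_cycle i w].

Definition occ (w : seq (wang_tile d C)) (a : wang_tile d C) : nat := count_mem a w.

Variable R : realFieldType.

Definition cond_star_star : Prop :=
  (forall i : 'I_d, exists w, is_cycle i w) /\
  exists x : 'I_d -> seq (wang_tile d C) -> R,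
    (forall i w, w \in simple_cycles i -> 0 <= x i w) /\
    (exists i, exists2 w, w \in simple_cycles i & x i w != 0) /\
    (forall a, a \in T -> forall i j : 'I_d,
        \sum_(w <- simple_cycles i) x i w * (occ w a)%:R =
        \sum_(w <- simple_cycles j) x j w * (occ w a)%:R).

Definition cond_star_star' : Prop :=
  exists x : wang_tile d C -> R,
    (forall tau, tau \in T -> 0 <= x tau) /\
    (exists2 tau, tau \in T & x tau != 0) /\
    (forall (i : 'I_d) (c : C),
        \sum_(tau in T | tau (gen i) == c) x tau =
        \sum_(tau in T | tau (geninv i) == c) x tau).

End Wang.

(* Main.v *)
Require Import Defs.
From mathcomp Require Import all_boot all_order all_algebra.
Set Implicit Arguments. Unset Strict Implicit. Unset Printing Implicit Defensive.
Import Order.TTheory GRing.Theory Num.Theory.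
Local Open Scope ring_scope.

Section Proofs.
Variables (d : nat) (C : finType) (T : {set wang_tile d C}) (R : realFieldType).
Local Notation W := (wang_tile d C).

Lemma cycle_count (i : 'I_d) (w : seq W) c :
  cycle (Gamma T i) w ->
  count (fun t : W => t (gen i) == c) w = count (fun t : W => t (geninv i) == c) w.
Proof.
case: w => [//|a s]; rewrite [cycle _ _]/=.
have H : forall x p, path (Gamma T i) x p ->
    map (fun t : W => t (gen i)) (belast x p) = map (fun t : W => t (geninv i)) p.
  move=> x p; elim: p x => [//|y p IH] x /= /andP[/and3P[_ _ /eqP->] /IH ->] //.
move/H; rewrite belast_rcons => E.
have -> : count (fun t : W => t (gen i) == c) (a :: s) =
          count (pred1 c) (map (fun t : W => t (gen i)) (a :: s)) by rewrite count_map.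
rewrite E count_map -rot1_cons.
by apply/permP; rewrite perm_rot.
Qed.

Lemma cycle_in_T i w : cycle (Gamma T i) w -> all (mem T) w.
Proof. by move=> H; apply/allP => x xw; have /and3P[] := next_cycle H xw. Qed.

Lemma sum_occ (P : pred W) w : all (mem T) w ->
  \sum_(t in T | P t) (occ w t)%:R = (count P w)%:R :> R.
Proof.
move=> Hw; rewrite -natr_sum; congr _%:R.
elim: w Hw => [|a w IH] /=; first by rewrite big1.
case/andP => aT /IH <-; rewrite /occ /= big_split /=; congr (_ + _)%N.
case Pa: (P a).
  rewrite (bigD1 a) /=; last by rewrite aT Pa.
  by rewrite eqxx big1 // => t /andP[_ /negbTE]; rewrite eq_sym => ->.
by rewrite big1 // => t /andP[_ Pt]; case: eqP => // E; rewrite -E Pa in Pt.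
Qed.

Definition balanced i (y : W -> R) := forall c,
  \sum_(t in T | t (gen i) == c) y t = \sum_(t in T | t (geninv i) == c) y t.

Lemma balanced_occ i w : cycle (Gamma T i) w -> balanced i (fun t => (occ w t)%:R).
Proof.
move=> H c; have Hw := cycle_in_T H.
rewrite (sum_occ (fun t : W => t (gen i) == c) Hw).
by rewrite (sum_occ (fun t : W => t (geninv i) == c) Hw) (cycle_count c H).
Qed.

Definition cone i (y : W -> R) := exists x : seq W -> R,
  (forall w, w \in simple_cycles T i -> 0 <= x w) /\
  forall a, a \in T -> y a = \sum_(w <- simple_cycles T i) x w * (occ w a)%:R.

Lemma canon_perm (w : seq W) : perm_eq (canon_rot w) w.
Proof. by case: w => [|a s] //=; rewrite perm_rot. Qed.

Lemma SC_simple i w : w \in simple_cycles T i -> is_simple_cycle T i w.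
Proof.
rewrite mem_undup => /mapP[w']; rewrite mem_filter => /andP[sw' _] ->.
move: sw'; rewrite /is_simple_cycle /is_cycle; case: w' => [//|a s] /=.
by rewrite rot_cycle rot_uniq -size_eq0 size_rot.
Qed.

Lemma seqs_in_mem s : all (mem T) s -> s \in seqs_in T (size s).
Proof.
elim: s => [|a s IH] /=; first by rewrite inE.
case/andP => aT /IH H; apply: (allpairs_f (fun x s => x :: s)) => //.
by rewrite mem_enum.
Qed.

Lemma SC_in i w : is_simple_cycle T i w -> canon_rot w \in simple_cycles T i.
Proof.
move=> H; rewrite mem_undup; apply/mapP; exists w => //; rewrite mem_filter H /=.
case/andP: H => /andP[w0 cw] uw; have Hw := cycle_in_T cw.
apply/flattenP; exists (seqs_in T (size w)); last exact: seqs_in_mem.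
apply: map_f; rewrite mem_iota lt0n size_eq0 w0 /= add1n ltnS cardE.
by apply: uniq_leq_size => // x xw; rewrite mem_enum; apply: (allP Hw).
Qed.


Lemma find_cycle i (P : pred W) :
  (forall t, P t -> exists t', P t' && Gamma T i t t') ->
  forall t0, P t0 -> exists w, is_simple_cycle T i w && all P w.
Proof.
move=> Hs t0 Pt0.
pose f t := if [pick t' | P t' && Gamma T i t t'] is Some t' then t' else t.
have Hf : forall t, P t -> P (f t) && Gamma T i t (f t).
  move=> t Pt; rewrite /f; case: pickP => [t' //|none].
  by have [t' Ht'] := Hs t Pt; rewrite none in Ht'.
have Pit : forall n t, P t -> P (iter n f t).
  by move=> n t Pt; elim: n => [//|n IH] /=; case/andP: (Hf _ IH).
have /trajectP[k kle Ek] := looping_order f t0.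
set z := iter k f t0.
have zcyc : exists k, iter k.+1 f z = z.
  exists (order f t0 - k.+1)%N; rewrite /z -iterD.
  by rewrite subnSK // subnK ?Ek // ltnW.
have fc : fcycle f (orbit f z) by exact: (all_iffLR (@orbitPcycle _ f z) 3 0 zcyc).
have allP' : all P (orbit f z).
  by apply/allP => y /trajectP[m _ ->]; apply/Pit/Pit.
exists (orbit f z); rewrite allP' andbT /is_simple_cycle /is_cycle orbit_uniq andbT.
apply/andP; split; first by apply/eqP => E; have := in_orbit f z; rewrite E.
apply: (sub_in_cycle _ allP' fc) => x y Px _ /eqP <-.
by case/andP: (Hf x Px).
Qed.

Lemma zero_cone i (y : W -> R) : (forall a, a \in T -> y a = 0) -> cone i y.
Proof.
move=> y0; exists (fun _ => 0); split => // a aT.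
by rewrite big1 ?(y0 a aT) // => w _; rewrite mul0r.
Qed.

Lemma cone_add i (y1 y2 : W -> R) :
  cone i y1 -> cone i y2 -> cone i (fun a => y1 a + y2 a).
Proof.
move=> [x1 [p1 e1]] [x2 [p2 e2]]; exists (fun w => x1 w + x2 w); split.
  by move=> w ws; rewrite addr_ge0 ?p1 ?p2.
move=> a aT; rewrite e1 // e2 // -big_split /=.
by apply: eq_bigr => w _; rewrite mulrDl.
Qed.

Lemma SC_uniq i : uniq (simple_cycles T i).
Proof. exact: undup_uniq. Qed.

Lemma cone_cycle i w (e : R) : is_simple_cycle T i w -> 0 <= e ->
  cone i (fun a => e * (occ w a)%:R).
Proof.
move=> sw e0; exists (fun v => if v == canon_rot w then e else 0); split.
  by move=> v _; case: ifP.
move=> a aT; rewrite (bigD1_seq (canon_rot w)) ?SC_uniq ?SC_in // eqxx.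
rewrite big1 ?addr0 => [|v /negbTE ->]; last by rewrite mul0r.
by rewrite /occ (permP (canon_perm w) (pred1 a)) [RHS]addr0.
Qed.

Lemma cone_ext i (y1 y2 : W -> R) :
  (forall a, a \in T -> y1 a = y2 a) -> cone i y1 -> cone i y2.
Proof. by move=> E [x [p e]]; exists x; split => // a aT; rewrite -E ?e. Qed.

Lemma decomp i n (y : W -> R) :
  (#|[set t in T | (0 < y t)%R]| <= n)%N -> (forall t, t \in T -> 0 <= y t) ->
  balanced i y -> cone i y.
Proof.
elim: n y => [|n IH] y Hc Hp Hb.
  apply: zero_cone => a aT.
  move: Hc; rewrite leqn0 => /eqP/cards0_eq S0.
  have : a \notin [set t in T | 0 < y t] by rewrite S0 inE.
  by rewrite inE aT /= lt_def Hp // andbT negbK => /eqP.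
case: (set_0Vmem [set t in T | 0 < y t]) => [S0 | [t0 t0S]].
  apply: zero_cone => a aT.
  have : a \notin [set t in T | 0 < y t] by rewrite S0 inE.
  by rewrite inE aT /= lt_def Hp // andbT negbK => /eqP.
pose P := fun t : W => (t \in T) && (0 < y t).
have Hs : forall t, P t -> exists t', P t' && Gamma T i t t'.
  move=> t /andP[tT yt].
  case: (boolP [exists t', P t' && (t (gen i) == t' (geninv i))]) =>
     [/existsP[t' /andP[Pt' e]] | /existsPn none].
    by exists t'; rewrite Pt' /Gamma tT e andbT; case/andP: Pt'.
  exfalso; have := Hb (t (gen i)).
  rewrite [X in _ = X]big1 => [|t' /andP[t'T /eqP e]]; last first.
    have := none t'; rewrite /P t'T e eqxx andbT /= lt_def Hp // andbT negbK.
    by move/eqP.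
  rewrite (bigD1 t) /=; last by rewrite tT eqxx.
  apply/eqP; rewrite gt_eqF //; apply: ltr_wpDr => //.
  by apply: sumr_ge0 => t' /andP[H _]; apply: Hp; case/andP: H.
have Pt0 : P t0 by move: t0S; rewrite inE.
have [w /andP[sw aw]] := find_cycle Hs Pt0.
case/andP: (sw) => /andP[w0 cw] uw.
have [b bw] : exists b, b \in w by case: w w0 {sw aw cw uw} => // b s _; exists b; rewrite mem_head.
have [a0 a0w a0min] : exists2 a0, a0 \in w & forall a, a \in w -> y a0 <= y a.
  case: (@arg_minP _ _ _ b [pred a | a \in w] y bw) => /= a0 a0w H.
  by exists a0.
have Pa0 : P a0 by apply: (allP aw).
case/andP: (Pa0) => a0T eps0.
set eps := y a0.
have occE : forall a, occ w a = (a \in w) by move=> a; rewrite /occ count_uniq_mem.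
pose y' := fun a => y a - eps * (occ w a)%:R.
have y'le : forall a, y' a <= y a.
  by move=> a; rewrite /y' lerBlDr lerDl mulr_ge0 // ltW.
have Hp' : forall t, t \in T -> 0 <= y' t.
  move=> t tT; rewrite /y' occE; case tw: (t \in w) => /=.
    by rewrite mulr1 subr_ge0 a0min.
  by rewrite mulr0 subr0 Hp.
have Hb' : balanced i y'.
  move=> c; rewrite /y' !sumrB -!mulr_sumr Hb.
  by rewrite (balanced_occ cw c).
have Hc' : (#|[set t in T | (0 < y' t)%R]| <= n)%N.
  rewrite -ltnS; apply: leq_trans Hc; apply: proper_card; apply/properP; split.
    apply/subsetP => t; rewrite !inE => /andP[-> /lt_le_trans]; apply; exact: y'le.
  exists a0; first by rewrite inE a0T.
  by rewrite inE a0T /= /y' occE a0w mulr1 subrr ltxx.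
have := cone_add (IH y' Hc' Hp' Hb') (@cone_cycle i w eps sw (ltW eps0)).
by apply: cone_ext => a _; rewrite /y' subrK.
Qed.
End Proofs.

Theorem mainTheorem1 (R : realFieldType) (d : nat) (C : finType)
    (T : {set wang_tile d C}) :
  (0 < d)%N ->
  cond_star_star' T R <-> cond_star_star T R.
Proof.
move=> d0; split.
- case=> x [xp [[t0 t0T xt0] xb]].
  have cones : forall i, cone T i x.
    by move=> i; apply: (decomp (leqnn _) xp) => c; exact: xb.
  have [X HX] := fin_all_exists cones.
  have key : forall i, exists2 w, w \in simple_cycles T i & X i w != 0.
    move=> i; case: (HX i) => _ e.
    case: (boolP (has (fun w => X i w != 0) (simple_cycles T i))) =>
       [/hasP[w ws nz] | /hasPn none]; first by exists w.
    exfalso; move: xt0; rewrite (e t0 t0T) big1_seq ?eqxx // => w /andP[_ ws].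
    by have := none w ws; rewrite negbK => /eqP ->; rewrite mul0r.
  split.
    by move=> i; have [w ws _] := key i; exists w; case/andP: (SC_simple ws).
  exists X; split; first by move=> i w ws; case: (HX i) => p _; exact: p.
  split; first by exists (Ordinal d0); exact: key.
  by move=> a aT i j; rewrite -(proj2 (HX i)) // -(proj2 (HX j)).
- case=> _ [X [Xp [[i0 [w0 w0s nz]] Xe]]].
  pose y a := \sum_(w <- simple_cycles T i0) X i0 w * (occ w a)%:R.
  have yp : forall a, 0 <= y a.
    move=> a; rewrite /y big_seq; apply: sumr_ge0 => w ws.
    by apply: mulr_ge0 (Xp _ _ ws) (ler0n _ _).
  exists y; split; first by move=> t _; exact: yp.
  split.
    case/andP: (SC_simple w0s) => /andP[w00 cw] uw.
    have [a aw] : exists a, a \in w0.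
      by case: w0 {w0s nz cw uw} w00 => // a s _; exists a; rewrite mem_head.
    exists a; first by apply: (allP (cycle_in_T cw)).
    rewrite /y (bigD1_seq w0) ?SC_uniq //=.
    rewrite gt_eqF //; apply: ltr_pwDl.
      rewrite mulr_gt0 //; last by rewrite /occ count_uniq_mem // aw.
      by rewrite lt_def nz Xp.
    by rewrite big_seq_cond; apply: sumr_ge0 => w /andP[ws _]; apply: mulr_ge0 (Xp _ _ ws) (ler0n _ _).
  move=> i c.
  rewrite (eq_bigr (fun t => \sum_(w <- simple_cycles T i) X i w * (occ w t)%:R));
    last by move=> t /andP[tT _]; rewrite /y (Xe t tT i0 i).
  rewrite [RHS](eq_bigr (fun t => \sum_(w <- simple_cycles T i) X i w * (occ w t)%:R));
    last by move=> t /andP[tT _]; rewrite /y (Xe t tT i0 i).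
  rewrite exchange_big [RHS]exchange_big /=.
  apply: eq_big_seq => w ws; rewrite -!mulr_sumr; congr (_ * _).
  case/andP: (SC_simple ws) => /andP[_ cw] _.
  exact: balanced_occ cw c.
Qed.
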